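(* Let $P\subseteq M_{\mathbb{R}}$ be a simplicial reflexive polytope having facets $F$ and $-F$. Let the vertex set of $F$ be $\{e_1,\dots,e_d\}$ and let $e_1^*,\dots,e_d^*$ be the dual $\mathbb{R}$-basis of $N_{\mathbb{R}}$. For $i=1,\dots,d$ let $F_i$ be the unique facet of $P$ with $F_i\cap F=\mathrm{conv}(e_j: j\neq i)$. Let $u=\eta_F$. Let $v$ be a vertex of $P$ with $\langle u,v\rangle=0$, and write $v=\sum_{i=1}^d q_ie_i$ with $q_i\in\mathbb{Q}$. Then for every $i=1,\dots,d$: $$q_i<0\iff q_i=-1\iff v\in F_i,$$ and in this case $e_i^*=\eta_{F_i}-u\in P^*\cap N$. Moreover, there are subsets $I,J\subseteq\{1,\dots,d\}$ with $I\cap J=\emptyset$ and $|I|=|J|$ such that $v=\sum_{j\in J}e_j-\sum_{i\in I}e_i$.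
   Context: $M\cong\mathbb{Z}^d$, $N=\mathrm{Hom}(M,\mathbb{Z})$ with pairing $\langle\cdot,\cdot\rangle$, $M_{\mathbb{R}},N_{\mathbb{R}}$ the real extensions. A Fano polytope is a $d$-dimensional lattice polytope in $M_{\mathbb{R}}$ with $0$ in its interior and primitive vertices; for a facet $F$, $\eta_F\in N_{\mathbb{R}}$ is the unique vector with $\langle\eta_F,x\rangle=-1$ for all $x\in F$. The dual polytope is $P^*=\{x\in N_{\mathbb{R}}:\langle x,y\rangle\ge-1\ \forall y\in P\}$, whose vertices are the $\eta_F$; $P$ is reflexive if $P^*$ is a lattice polytope; simplicial if each facet is a simplex. Note $e_1,\dots,e_d$ need not be a lattice basis. *)

(* Defs.v *)
From HB Require Import structures.
From mathcomp Require Import all_boot all_order all_algebra.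
From mathcomp Require Import reals.
Set Implicit Arguments. Unset Strict Implicit. Unset Printing Implicit Defensive.
Import Order.TTheory GRing.Theory Num.Theory.
Local Open Scope ring_scope.

(* M = Z^d sits in M_R = R^d (row vectors); N = Hom(M,Z) is identified with Z^d
   in N_R = R^d, and the pairing <y,x> is the standard dot product. *)
Definition pt (R : realType) (d : nat) := 'rV[R]_d.

Definition pairing (R : realType) (d : nat) (y x : 'rV[R]_d) : R :=
  \sum_(i < d) y 0 i * x 0 i.

Definition lattice_pt (R : realType) (d : nat) (x : 'rV[R]_d) : Prop :=
  forall i, x 0 i \is a Num.int.

Definition primitive (R : realType) (d : nat) (x : 'rV[R]_d) : Prop :=
  lattice_pt x /\ x != 0 /\
  forall (k : nat) (y : 'rV[R]_d), (1 < k)%N -> lattice_pt y -> x <> k%:R *: y.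

Definition conv_on (R : realType) (d n : nat) (p : 'I_n -> 'rV[R]_d)
  (A : pred 'I_n) (x : 'rV[R]_d) : Prop :=
  exists w : 'I_n -> R,
    (forall i, 0 <= w i) /\ (forall i, ~~ A i -> w i = 0) /\
    \sum_(i < n) w i = 1 /\ x = \sum_(i < n) w i *: p i.

Definition conv (R : realType) (d n : nat) (p : 'I_n -> 'rV[R]_d) :=
  conv_on p predT.

Definition aff_indep (R : realType) (d n : nat) (p : 'I_n -> 'rV[R]_d) : Prop :=
  forall c : 'I_n -> R, \sum_(i < n) c i = 0 -> \sum_(i < n) c i *: p i = 0 ->
    forall i, c i = 0.

Definition polytope (R : realType) (d : nat) (P : 'rV[R]_d -> Prop) : Prop :=
  exists n (p : 'I_n -> 'rV[R]_d), forall x, P x <-> conv p x.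

Definition is_vertex (R : realType) (d : nat) (P : 'rV[R]_d -> Prop) (v : 'rV[R]_d) :=
  P v /\ forall y z (t : R), P y -> P z -> 0 < t < 1 ->
    v = t *: y + (1 - t) *: z -> y = v /\ z = v.

Definition zero_interior (R : realType) (d : nat) (P : 'rV[R]_d -> Prop) :=
  exists eps : R, 0 < eps /\ forall x : 'rV[R]_d, (forall i, `|x 0 i| < eps) -> P x.

(* facet: a face (intersection with a supporting hyperplane) of dimension d-1 *)
Definition facet (R : realType) (d : nat) (P F : 'rV[R]_d -> Prop) : Prop :=
  exists (a : 'rV[R]_d) (b : R), a != 0 /\
    (forall x, P x -> b <= pairing a x) /\
    (forall x, F x <-> (P x /\ pairing a x = b)) /\
    exists p : 'I_d -> 'rV[R]_d, (forall i, F (p i)) /\ aff_indep p.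

Definition neg_set (R : realType) (d : nat) (F : 'rV[R]_d -> Prop) :=
  fun x : 'rV[R]_d => F (- x).

(* eta_F : <eta_F, x> = -1 for all x in F (unique for a facet of a Fano polytope) *)
Definition is_eta (R : realType) (d : nat) (F : 'rV[R]_d -> Prop) (eta : 'rV[R]_d) :=
  forall x, F x -> pairing eta x = -1.

Definition dual (R : realType) (d : nat) (P : 'rV[R]_d -> Prop) :=
  fun y : 'rV[R]_d => forall x, P x -> -1 <= pairing y x.

Definition fano (R : realType) (d : nat) (P : 'rV[R]_d -> Prop) : Prop :=
  polytope P /\ zero_interior P /\ (forall v, is_vertex P v -> primitive v).

Definition reflexive_polytope (R : realType) (d : nat) (P : 'rV[R]_d -> Prop) : Prop :=
  fano P /\ forall y, is_vertex (dual P) y -> lattice_pt y.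

Definition simplex (R : realType) (d : nat) (F : 'rV[R]_d -> Prop) : Prop :=
  exists n (p : 'I_n -> 'rV[R]_d), aff_indep p /\ forall x, F x <-> conv p x.

Definition simplicial (R : realType) (d : nat) (P : 'rV[R]_d -> Prop) : Prop :=
  forall F, facet P F -> simplex F.

(* Main.v *)
Require Import Defs.
From HB Require Import structures.
From mathcomp Require Import all_boot all_order all_algebra.
From mathcomp Require Import reals.
From mathcomp Require Import ring lra zify.
Import Order.TTheory GRing.Theory Num.Theory.
Local Open Scope ring_scope.
From Stdlib Require Import Classical.
Set Implicit Arguments. Unset Strict Implicit. Unset Printing Implicit Defensive.
Section S.
Context {R : realType} {d : nat}.
Implicit Types (x y w : 'rV[R]_d).

Lemma pairingC x y : pairing x y = pairing y x.
Proof. by apply: eq_bigr => i _; rewrite mulrC. Qed.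
Lemma pairingDr y x1 x2 : pairing y (x1 + x2) = pairing y x1 + pairing y x2.
Proof. by rewrite /pairing -big_split; apply: eq_bigr => i _; rewrite mxE mulrDr. Qed.
Lemma pairingZr y a x : pairing y (a *: x) = a * pairing y x.
Proof. by rewrite /pairing mulr_sumr; apply: eq_bigr => i _; rewrite mxE mulrCA. Qed.
Lemma pairing0r y : pairing y 0 = 0.
Proof. by rewrite /pairing big1 // => i _; rewrite mxE mulr0. Qed.
Lemma pairingNr y x : pairing y (- x) = - pairing y x.
Proof. by rewrite -scaleN1r pairingZr mulN1r. Qed.
Lemma pairingBr y x1 x2 : pairing y (x1 - x2) = pairing y x1 - pairing y x2.
Proof. by rewrite pairingDr pairingNr. Qed.
Lemma pairing_sumr (I : Type) (r : seq I) (Pr : pred I) (F : I -> 'rV[R]_d) y :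
  pairing y (\sum_(i <- r | Pr i) F i) = \sum_(i <- r | Pr i) pairing y (F i).
Proof.
apply: (big_ind2 (fun a b => pairing y a = b)); first exact: pairing0r.
  by move=> a1 a2 b1 b2 <- <-; rewrite pairingDr.
by [].
Qed.
Lemma pairingDl y1 y2 x : pairing (y1 + y2) x = pairing y1 x + pairing y2 x.
Proof. by rewrite pairingC pairingDr !(pairingC x). Qed.
Lemma pairingZl a y x : pairing (a *: y) x = a * pairing y x.
Proof. by rewrite pairingC pairingZr pairingC. Qed.
Lemma pairingNl y x : pairing (- y) x = - pairing y x.
Proof. by rewrite pairingC pairingNr pairingC. Qed.
Lemma pairingBl y1 y2 x : pairing (y1 - y2) x = pairing y1 x - pairing y2 x.
Proof. by rewrite pairingDl pairingNl. Qed.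
Lemma pairing0l x : pairing 0 x = 0.
Proof. by rewrite pairingC pairing0r. Qed.
Lemma pairing_suml (I : Type) (r : seq I) (Pr : pred I) (F : I -> 'rV[R]_d) x :
  pairing (\sum_(i <- r | Pr i) F i) x = \sum_(i <- r | Pr i) pairing (F i) x.
Proof. by rewrite pairingC pairing_sumr; apply: eq_bigr => i _; rewrite pairingC. Qed.

Lemma pairing_int x y : lattice_pt x -> lattice_pt y -> pairing x y \is a Num.int.
Proof. by move=> hx hy; apply: rpred_sum => i _; apply: rpredM. Qed.

Lemma int_lt_le (a b : R) : a \is a Num.int -> b \is a Num.int -> a < b -> a + 1 <= b.
Proof.
move=> /intrP[m ->] /intrP[n ->]; rewrite ltr_int => h.
have -> : (m%:~R + 1 : R) = (m + 1)%:~R by rewrite rmorphD.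
by rewrite ler_int; lia.
Qed.

Lemma basis0 (b : 'I_d -> 'rV[R]_d) w :
  (forall c : 'I_d -> R, \sum_k c k *: b k = 0 -> forall k, c k = 0) ->
  (forall k, pairing w (b k) = 0) -> w = 0.
Proof.
move=> hind hw.
pose B : 'M[R]_d := \matrix_(k, j) b k 0 j.
have rowB k : row k B = b k by apply/rowP => j; rewrite !mxE.
have hfree : row_free B.
  rewrite -kermx_eq0; apply/negPn/negP => /rowV0Pn [z /sub_kermxP hz nz].
  move/negP: nz; apply; apply/eqP/rowP => k; rewrite mxE.
  apply: hind k; rewrite -[RHS]hz mulmx_sum_row; apply: eq_bigr => i _; by rewrite rowB.
have hu : B \in unitmx by rewrite -row_free_unit.
have hBw : B *m w^T = 0.
  apply/matrixP => k j; rewrite !mxE (ord1 j); rewrite -[RHS](hw k) pairingC /pairing.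
  by apply: eq_bigr => i _; rewrite !mxE.
apply: trmx_inj; rewrite trmx0 -(mulKmx hu (w^T)) hBw mulmx0 //.
Qed.

Definition lin_indep (b : 'I_d -> 'rV[R]_d) :=
  forall c : 'I_d -> R, \sum_k c k *: b k = 0 -> forall k, c k = 0.

Lemma W1 n (w : 'I_n -> R) k : (forall l, 0 <= w l) -> \sum_l w l = 1 -> w k <= 1.
Proof.
move=> h0 h1; move: h1; rewrite (bigD1 k) //= => h1.
have : 0 <= \sum_(l < n | l != k) w l by apply: sumr_ge0.
lra.
Qed.

Lemma W2 n (w : 'I_n -> R) k : (forall l, 0 <= w l) -> \sum_l w l = 1 -> w k = 1 ->
  forall l, l != k -> w l = 0.
Proof.
move=> h0 h1 hk; move: h1; rewrite (bigD1 k) //= hk => h1 l hl.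
have h2 : \sum_(l < n | l != k) w l = 0 by lra.
by move/psumr_eq0P: h2 => ->.
Qed.

Lemma W3 n (w : 'I_n -> R) (p : 'I_n -> 'rV[R]_d) k : (forall l, 0 <= w l) ->
  \sum_l w l = 1 -> w k = 1 -> \sum_l w l *: p l = p k.
Proof.
move=> h0 h1 hk; rewrite (bigD1 k) //= hk scale1r big1 ?addr0 // => l hl.
by rewrite (W2 h0 h1 hk hl) scale0r.
Qed.

Lemma sum_delta n (p : 'I_n -> 'rV[R]_d) k : \sum_l (l == k)%:R *: p l = p k.
Proof.
rewrite (bigD1 k) //= eqxx scale1r big1 ?addr0 // => l /negbTE ->; by rewrite scale0r.
Qed.

Lemma sum_deltaR n k : \sum_(l < n) ((l == k)%:R : R) = 1.
Proof.
rewrite (bigD1 k) //= eqxx big1 ?addr0 // => l /negbTE ->; by [].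
Qed.

Lemma conv_on_delta n (p : 'I_n -> 'rV[R]_d) (A : pred 'I_n) k : A k -> conv_on p A (p k).
Proof.
move=> hk; exists (fun l => (l == k)%:R); split; first by move=> l; rewrite ler0n.
split; first by move=> l hl; case: eqP => // e; rewrite e hk in hl.
by split; [exact: sum_deltaR | rewrite sum_delta].
Qed.

Lemma conv_on_ge n (p : 'I_n -> 'rV[R]_d) (A : pred 'I_n) y c x :
  (forall k, A k -> c <= pairing y (p k)) -> conv_on p A x -> c <= pairing y x.
Proof.
move=> hk [w [w0 [wA [w1 ->]]]].
rewrite pairing_sumr -[c]mul1r -w1 mulr_suml; apply: ler_sum => k _.
rewrite pairingZr; case hA: (A k); first by apply: ler_wpM2l; [exact: w0 | exact: hk].
by rewrite wA ?hA // !mul0r.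
Qed.

Lemma tight (P : 'rV[R]_d -> Prop) y (b : 'I_d -> 'rV[R]_d) :
  dual P y -> lin_indep b -> (forall k, P (b k)) -> (forall k, pairing y (b k) = -1) ->
  is_vertex (dual P) y.
Proof.
move=> hy hb hP hyb; split => // a z t ha hz /andP[t0 t1] e.
have key : forall k, pairing a (b k) = -1 /\ pairing z (b k) = -1.
  move=> k; have h1 := ha _ (hP k); have h2 := hz _ (hP k).
  have := hyb k; rewrite e pairingDl !pairingZl => h3.
  split; nra.
split; apply/eqP; rewrite -subr_eq0; apply/eqP; apply: (basis0 hb) => k;
  rewrite pairingBl hyb; [case: (key k) => -> _ | case: (key k) => _ ->]; by rewrite subrr.
Qed.

Lemma facet_eta (P G : 'rV[R]_d -> Prop) y :
  facet P G -> P 0 -> is_eta G y ->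
  dual P y /\ is_vertex (dual P) y /\ (forall x, G x <-> (P x /\ pairing y x = -1)).
Proof.
move=> [a [b [a0 [Hineq [Hchar [p [Gp Hp]]]]]]] P0 Hy.
have Pp k : P (p k) /\ pairing a (p k) = b by apply/Hchar.
have yp k : pairing y (p k) = -1 by apply: Hy.
have lin : lin_indep p.
  move=> c hc; apply: Hp => //.
  have := congr1 (pairing y) hc; rewrite pairing0r pairing_sumr.
  under eq_bigr do rewrite pairingZr yp mulrN1.
  by rewrite sumrN => /eqP; rewrite oppr_eq0 => /eqP.
have ha : a + b *: y = 0.
  apply: (basis0 lin) => k; rewrite pairingDl pairingZl yp (Pp k).2; lra.
have b0 : b <= 0 by have := Hineq 0 P0; rewrite pairing0r.
have bn0 : b != 0.
  apply/eqP => eb; move: ha; rewrite eb scale0r addr0 => ea; by rewrite ea eqxx in a0.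
have blt : b < 0 by rewrite lt_neqAle bn0 b0.
have hpa x : pairing a x = - b * pairing y x.
  have -> : a = - (b *: y) by apply/eqP; rewrite -addr_eq0 ha.
  by rewrite pairingNl pairingZl mulNr.
have hd : dual P y.
  move=> x Px; have := Hineq x Px; rewrite hpa => h; nra.
split=> //; split; first exact: (tight hd lin (fun k => (Pp k).1) yp).
move=> x; rewrite Hchar hpa; split => -[Px h]; split=> //.
  have hb : - b != 0 by rewrite oppr_eq0.
  by apply: (mulfI hb); rewrite h mulrN1 opprK.
by rewrite h mulrN1 opprK.
Qed.

Lemma sum_if n (V : zmodType) (f : 'I_n -> V) k :
  \sum_l (if l == k then 0 else f l) = \sum_(l | l != k) f l.
Proof.
rewrite (bigD1 k) //= eqxx add0r; apply: eq_bigr => l /negbTE ->; by [].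
Qed.

Lemma ext_conv (G : 'rV[R]_d -> Prop) n (s : 'I_n -> 'rV[R]_d) x :
  (forall z, G z <-> conv s z) -> is_vertex G x -> exists k, s k = x.
Proof.
move=> Hs [Gx Hext].
have [w [w0 [_ [w1 ex]]]] := (Hs x).1 Gx.
have [k /= hk | hn] := pickP (fun k => 0 < w k); last first.
  exfalso; have : \sum_l w l = 0.
    by apply: big1 => l _; apply/eqP; rewrite eq_le w0 andbT leNgt hn.
  by rewrite w1 => /eqP; rewrite oner_eq0.
exists k.
have wk1 := W1 k w0 w1.
have [e1 | ne1] := eqVneq (w k) 1.
  by rewrite ex (W3 _ w0 w1 e1).
have lt1 : w k < 1 by rewrite lt_neqAle ne1 wk1.
pose w' l := if l == k then 0 else w l / (1 - w k).
pose z := \sum_l w' l *: s l.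
have Gz : G z.
  apply/Hs; exists w'; split.
    by move=> l; rewrite /w'; case: eqP => // _; apply: divr_ge0 => //; lra.
  split=> //; split=> //.
  rewrite /w' sum_if -mulr_suml; move: w1; rewrite (bigD1 k) //= => w1.
  have -> : \sum_(i < n | i != k) w i = 1 - w k by lra.
  by rewrite divff // subr_eq0 eq_sym.
have Gsk : G (s k) by apply/Hs; apply: conv_on_delta.
have hx : x = w k *: s k + (1 - w k) *: z.
  rewrite /z scaler_sumr ex (bigD1 k) //=; congr (_ + _).
  rewrite [RHS](bigD1 k) //= /w' eqxx scale0r scaler0 add0r; apply: eq_bigr => l /negbTE ->.
  rewrite scalerA mulrC -mulrA mulVf ?mulr1 //; rewrite subr_eq0 eq_sym //.
have := Hext (s k) z (w k) Gsk Gz; rewrite hk lt1 => /(_ isT hx) [] //.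
Qed.

Lemma nodep (P G : 'rV[R]_d -> Prop) y (T : finType) (pts : T -> 'rV[R]_d) (al : T -> R) t0 :
  simplex G -> (forall x, G x -> P x) -> (forall x, G x -> pairing y x = -1) ->
  (forall m, is_vertex P (pts m)) -> (forall m, G (pts m)) ->
  (forall m, m != t0 -> pts m != pts t0) ->
  \sum_m al m *: pts m = 0 -> al t0 = 0.
Proof.
move=> [n [s [aff Hs]]] GP Gy hv hG hne hsum.
have hk m : exists k, s k = pts m.
  apply: (ext_conv Hs); have [Pv Hv] := hv m; split; first exact: hG.
  by move=> a b t Ga Gb; apply: Hv; apply: GP.
have [k0 _] := hk t0.
pose kf m := odflt k0 [pick k | s k == pts m].
have hkf m : s (kf m) = pts m.
  rewrite /kf; case: pickP => [k /eqP //| hn] /=.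
  by have [k hk'] := hk m; have := hn k; rewrite hk' eqxx.
pose c k := \sum_(m | kf m == k) al m.
have sal : \sum_m al m = 0.
  have := congr1 (pairing y) hsum; rewrite pairing0r pairing_sumr.
  under eq_bigr do rewrite pairingZr (Gy _ (hG _)) mulrN1.
  by rewrite sumrN => /eqP; rewrite oppr_eq0 => /eqP.
have hc1 : \sum_k c k = 0.
  by rewrite -[RHS]sal (partition_big kf predT) //.
have hc2 : \sum_k c k *: s k = 0.
  rewrite -[RHS]hsum (partition_big kf predT) //=; apply: eq_bigr => k _.
  rewrite /c scaler_suml; apply: eq_bigr => m /eqP <-; by rewrite hkf.
have := aff c hc1 hc2 (kf t0); rewrite /c (big_pred1 t0) // => m /=.
apply/eqP/eqP => [e|->] //; apply/eqP; apply: contraT => hm.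
by have := hne m hm; rewrite -hkf e hkf eqxx.
Qed.

Lemma remove_gen (P : 'rV[R]_d -> Prop) n (p : 'I_n -> 'rV[R]_d) (A : {set 'I_n}) k :
  (forall x, P x <-> conv_on p (mem A) x) -> k \in A -> ~ is_vertex P (p k) ->
  forall x, P x <-> conv_on p (mem (A :\ k)) x.
Proof.
move=> hchar kA hnv.
have Ppk : P (p k) by apply/hchar; apply: conv_on_delta.
have [y [z [t [Py [Pz [ht [e hne]]]]]]] : exists y z t, P y /\ P z /\ 0 < t < 1 /\
    p k = t *: y + (1 - t) *: z /\ ~ (y = p k /\ z = p k).
  apply: NNPP => hn; apply: hnv; split => // y z t Py Pz ht e.
  by apply: NNPP => hne; apply: hn; exists y, z, t.
have [a [a0 [aA [a1 ey]]]] := (hchar y).1 Py.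
have [b [b0 [bA [b1 ez]]]] := (hchar z).1 Pz.
move/andP: ht => [t0 t1].
pose g l := t * a l + (1 - t) * b l.
have g0 l : 0 <= g l.
  by rewrite /g; apply: addr_ge0; apply: mulr_ge0 => //; [exact: ltW | lra].
have gA l : l \notin A -> g l = 0 by move=> hl; rewrite /g aA ?bA // !mulr0 addr0.
have g1 : \sum_l g l = 1.
  rewrite /g big_split /= -!mulr_sumr a1 b1; lra.
have eg : p k = \sum_l g l *: p l.
  rewrite e ey ez !scaler_sumr -big_split /=; apply: eq_bigr => l _.
  by rewrite /g [RHS]scalerDl !scalerA.
have gk : g k < 1.
  rewrite lt_neqAle (W1 k g0 g1) andbT; apply/eqP => gk1.
  have ak := W1 k a0 a1; have bk := W1 k b0 b1.
  have hak : a k = 1 by move: gk1; rewrite /g; nra.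
  have hbk : b k = 1 by move: gk1; rewrite /g; nra.
  by apply: hne; rewrite ey ez (W3 _ a0 a1 hak) (W3 _ b0 b1 hbk).
have gk' : 0 < 1 - g k by lra.
move=> x; split; last first.
  move=> [w [w0 [wA [w1 ex]]]]; apply/hchar; exists w; split=> //; split=> // l hl.
  by apply: wA; move: hl; rewrite !inE => hl; rewrite (negbTE hl) andbF.
move=> /hchar [w [w0 [wA [w1 ex]]]].
pose w' l := if l == k then 0 else w l + w k * g l / (1 - g k).
exists w'; split.
  move=> l; rewrite /w'; case: eqP => // _; apply: addr_ge0 => //.
  by apply: divr_ge0; [apply: mulr_ge0|exact: ltW].
split.
  move=> l; rewrite /w' !inE negb_and negbK; case: eqP => //= _ hl.
  by rewrite wA // gA // mulr0 mul0r addr0.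
have sg : \sum_(l | l != k) g l = 1 - g k by move: g1; rewrite (bigD1 k) //=; lra.
split.
  rewrite /w' sum_if big_split /= -mulr_suml -mulr_sumr sg.
  move: w1; rewrite (bigD1 k) //= => w1.
  rewrite -mulrA divff ?mulr1; [lra | by rewrite lt0r_neq0].
have sgp : \sum_(l | l != k) g l *: p l = (1 - g k) *: p k.
  have := eg; rewrite (bigD1 k) //= => e2.
  by rewrite scalerBl scale1r {1}e2 addrC addrK.
have -> : \sum_l w' l *: p l = \sum_(l | l != k) (w l + w k * g l / (1 - g k)) *: p l.
  rewrite (bigD1 k) //= /w' eqxx scale0r add0r; apply: eq_bigr => l /negbTE ->; by [].
under eq_bigr do rewrite scalerDl.
rewrite big_split /=.
have -> : \sum_(i < n | i != k) (w k * g i / (1 - g k)) *: p i = w k *: p k.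
  transitivity ((w k / (1 - g k)) *: \sum_(i | i != k) g i *: p i).
    rewrite scaler_sumr; apply: eq_bigr => l _; rewrite scalerA; congr (_ *: _).
    by rewrite mulrAC.
  by rewrite sgp scalerA divfK // lt0r_neq0.
by rewrite ex (bigD1 k) //= addrC.
Qed.

Lemma km (P : 'rV[R]_d -> Prop) n (p : 'I_n -> 'rV[R]_d) :
  (forall x, P x <-> conv p x) -> forall x, P x ->
  exists w : 'I_n -> R, (forall k, 0 <= w k) /\ \sum_k w k = 1 /\
    x = \sum_k w k *: p k /\ (forall k, w k != 0 -> is_vertex P (p k)).
Proof.
move=> hP.
suff H : forall m (A : {set 'I_n}), (#|A| <= m)%N ->
    (forall x, P x <-> conv_on p (mem A) x) -> forall x, P x ->
  exists w : 'I_n -> R, (forall k, 0 <= w k) /\ \sum_k w k = 1 /\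
    x = \sum_k w k *: p k /\ (forall k, w k != 0 -> is_vertex P (p k)).
  apply: (H n setT); first by rewrite cardsT card_ord.
  move=> x; rewrite hP; split => -[w [w0 [wA [w1 ex]]]]; exists w; do !split => //.
  by move=> i; rewrite -[mem _ i]/(i \in _) in_setT.
elim=> [|m IH] A hA hchar x Px.
  have [w [w0 [wA [w1 ex]]]] := (hchar x).1 Px.
  exfalso; suff : \sum_k w k = 0 by rewrite w1 => /eqP; rewrite oner_eq0.
  apply: big1 => i _; apply: wA; move: hA; rewrite leqn0 cards_eq0 => /eqP ->.
  by rewrite -[mem _ i]/(i \in _) in_set0.
case: (classic (forall k, k \in A -> is_vertex P (p k))) => [hall | hn].
  have [w [w0 [wA [w1 ex]]]] := (hchar x).1 Px.
  exists w; split=> //; split=> //; split=> // k hk; apply: hall; apply: contraT => hkA.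
  by rewrite wA ?eqxx in hk.
have [k hk] : exists k, k \in A /\ ~ is_vertex P (p k).
  apply: NNPP => h; apply: hn => k kA; apply: NNPP => hv; apply: h; by exists k.
case: hk => kA hv.
apply: (IH (A :\ k)) => //; last exact: remove_gen hchar kA hv.
by move: hA; rewrite (cardsD1 k A) kA.
Qed.

Lemma big_option (V : zmodType) n (F : option 'I_n -> V) :
  \sum_m F m = F None + \sum_j F (Some j).
Proof.
rewrite (bigD1 None) //=; congr (_ + _).
rewrite (reindex_omap Some (fun m => m)) //=; last by case.
by apply: eq_bigl => j; rewrite eqxx.
Qed.

Lemma argmin n (Q : pred 'I_n) (f : 'I_n -> R) k0 :
  Q k0 -> exists k, Q k /\ forall l, Q l -> f k <= f l.
Proof.
by move=> h; case: (Order.TotalTheory.arg_minP f h) => k hk hmin; exists k; split.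
Qed.

Lemma int12 (c : R) : c \is a Num.int -> 0 < c -> c <= 2 -> c = 1 \/ c = 2.
Proof.
move=> /intrP[m ->]; rewrite -[2]/(2%:~R) -[0]/(0%:~R) ltr_int ler_int => h1 h2.
have [->|->] : m = 1 \/ m = 2 by lia.
  by left.
by right.
Qed.

Lemma int01 (c : R) : c \is a Num.int -> 0 < c -> c <= 1 -> c = 1.
Proof.
move=> /intrP[m ->]; rewrite -[1]/(1%:~R) -[0]/(0%:~R) ltr_int ler_int => h1 h2.
by have -> : m = 1 by lia.
Qed.

Lemma intm1 (c : R) : c \is a Num.int -> -1 <= c -> c < 0 -> c = -1.
Proof.
move=> /intrP[m ->]; rewrite -[-1]/((-1)%:~R) -[0]/(0%:~R) ltr_int ler_int => h1 h2.
by have -> : m = -1 by lia.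
Qed.

Lemma intm101 (c : R) : c \is a Num.int -> -1 <= c -> c <= 1 -> c = -1 \/ c = 0 \/ c = 1.
Proof.
move=> /intrP[m ->]; rewrite -[-1]/((-1)%:~R) -[1]/(1%:~R) !ler_int => h1 h2.
have [->|[->|->]] : m = -1 \/ m = 0 \/ m = 1 by lia.
- by left.
- by right; left.
- by right; right.
Qed.

Lemma ratr_eq (a b : rat) : ratr a = ratr b :> R -> a = b.
Proof. by move=> h; apply: le_anti; rewrite -!(ler_rat R) h lexx. Qed.

Lemma lattice_sub y1 y2 : lattice_pt y1 -> lattice_pt y2 -> lattice_pt (y1 - y2).
Proof. by move=> h1 h2 i; rewrite !mxE; apply: rpredB. Qed.

Lemma dual_basis (e es : 'I_d -> 'rV[R]_d) :
  (forall i j, pairing (es i) (e j) = (i == j)%:R) ->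
  (forall x, x = \sum_j pairing (es j) x *: e j) /\
  (forall w, w = \sum_j pairing w (e j) *: es j).
Proof.
move=> hes.
pose E : 'M[R]_d := \matrix_(j, k) e j 0 k.
pose S : 'M[R]_d := \matrix_(j, k) es j 0 k.
have SE : S *m E^T = 1%:M.
  apply/matrixP => i j; rewrite !mxE -hes /pairing; apply: eq_bigr => k _; by rewrite !mxE.
have ES := mulmx1C SE.
have SE' : S^T *m E = 1%:M by rewrite -[E]trmxK -trmx_mul ES trmx1.
split.
  move=> x; rewrite -{1}[x]mulmx1 -SE' mulmxA mulmx_sum_row; apply: eq_bigr => j _.
  congr (_ *: _); last by apply/rowP => k; rewrite !mxE.
  rewrite pairingC /pairing !mxE; apply: eq_bigr => k _; by rewrite !mxE.
move=> w; rewrite -{1}[w]mulmx1 -ES mulmxA mulmx_sum_row; apply: eq_bigr => j _.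
congr (_ *: _); last by apply/rowP => k; rewrite !mxE.
rewrite /pairing !mxE; apply: eq_bigr => k _; by rewrite !mxE.
Qed.

Lemma coord (e es : 'I_d -> 'rV[R]_d) (r : 'I_d -> R) i :
  (forall i j, pairing (es i) (e j) = (i == j)%:R) ->
  pairing (es i) (\sum_j r j *: e j) = r i.
Proof.
move=> hes; rewrite pairing_sumr (bigD1 i) //= pairingZr hes eqxx mulr1 big1 ?addr0 //.
by move=> j hj; rewrite pairingZr hes eq_sym (negbTE hj) mulr0.
Qed.

Lemma km_ge (P : 'rV[R]_d -> Prop) n (p : 'I_n -> 'rV[R]_d) y c :
  (forall x, P x <-> conv p x) -> (forall z, is_vertex P z -> c <= pairing y z) ->
  forall x, P x -> c <= pairing y x.
Proof.
move=> hp hv x Px; have [w [w0 [w1 [ex hw]]]] := km hp Px.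
rewrite ex pairing_sumr -[c]mul1r -w1 mulr_suml; apply: ler_sum => k _.
rewrite pairingZr; have [->|nz] := eqVneq (w k) 0; first by rewrite !mul0r.
by apply: ler_wpM2l => //; apply: hv; apply: hw.
Qed.
End S.

Unset Implicit Arguments.

Theorem lemma3p1 (R : realType) (d : nat) (P F : 'rV[R]_d -> Prop)
  (e estar : 'I_d -> 'rV[R]_d) (Fi : 'I_d -> 'rV[R]_d -> Prop)
  (etaFi : 'I_d -> 'rV[R]_d) (u v : 'rV[R]_d) (q : 'I_d -> rat) :
  reflexive_polytope P -> simplicial P ->
  facet P F -> facet P (neg_set F) ->
  injective e -> (forall x, is_vertex F x <-> exists i, x = e i) ->
  (forall i j, pairing (estar i) (e j) = (i == j)%:R) ->
  (forall i, facet P (Fi i) /\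
     forall x, (Fi i x /\ F x) <-> conv_on e (fun j => j != i) x) ->
  (forall i, is_eta (Fi i) (etaFi i)) ->
  is_eta F u ->
  is_vertex P v -> pairing u v = 0 ->
  v = \sum_(i < d) ratr (q i) *: e i ->
  (forall i,
     (q i < 0 <-> q i = -1) /\ (q i = -1 <-> Fi i v) /\
     (q i < 0 -> estar i = etaFi i - u /\ dual P (estar i) /\ lattice_pt (estar i))) /\
  exists I J : {set 'I_d}, [disjoint I & J] /\ #|I| = #|J| /\
    v = \sum_(j in J) e j - \sum_(i in I) e i.
Proof.
move=> hrefl hsimp hF hnF einj hvF hest hFi heta hu hv huv hvq.
case: hrefl => [[hpoly [[eps [eps0 hball]] hprim]] hlat].
have P0 : P 0 by apply: hball => i; rewrite mxE normr0.
have vlat z : is_vertex P z -> lattice_pt z by move=> h; case: (hprim z h).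
have [uD [uV uchar]] := facet_eta hF P0 hu.
have ulat := hlat u uV.
have hnu : is_eta (neg_set F) (- u).
  by move=> x hx; rewrite pairingNl -pairingNr; apply: hu.
have [nuD [_ nuchar]] := facet_eta hnF P0 hnu.
have Fe j : F (e j) by case: ((hvF (e j)).2 (ex_intro _ j erefl)).
have Pe j : P (e j) by case: ((uchar _).1 (Fe j)).
have ue j : pairing u (e j) = -1 by apply: hu.
have Pne j : P (- e j).
  by case: ((nuchar (- e j)).1 _) => //; rewrite /neg_set opprK.
have une j : pairing u (- e j) = 1 by rewrite pairingNr ue opprK.
have Ve j : is_vertex P (e j).
  split=> // y z t Py Pz /andP[t0 t1] ee.
  have hy := uD y Py; have hz := uD z Pz.
  have : pairing u (e j) = t * pairing u y + (1 - t) * pairing u z.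
    by rewrite ee pairingDr !pairingZr.
  rewrite ue => h.
  have uy : pairing u y = -1 by nra.
  have uz : pairing u z = -1 by nra.
  have [_ hext] := (hvF (e j)).2 (ex_intro _ j erefl).
  have Fy : F y by apply/uchar.
  have Fz : F z by apply/uchar.
  exact: (hext y z t Fy Fz (introT andP (conj t0 t1)) ee).
have Vne j : is_vertex P (- e j).
  split=> // y z t Py Pz /andP[t0 t1] ee.
  have hy := nuD y Py; have hz := nuD z Pz.
  have : pairing (- u) (- e j) = t * pairing (- u) y + (1 - t) * pairing (- u) z.
    by rewrite ee pairingDr !pairingZr.
  rewrite pairingNl une => h.
  have uy : pairing (- u) y = -1 by nra.
  have uz : pairing (- u) z = -1 by nra.
  have [_ hext] := (hvF (e j)).2 (ex_intro _ j erefl).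
  have [Fy Fz] : F (- y) /\ F (- z).
    by split; [exact: ((nuchar y).2 (conj Py uy)) | exact: ((nuchar z).2 (conj Pz uz))].
  have ee' : e j = t *: (- y) + (1 - t) *: (- z).
    by rewrite !scalerN -opprD -ee opprK.
  have [e1 e2] := hext _ _ t Fy Fz (introT andP (conj t0 t1)) ee'.
  by split; [rewrite -e1 | rewrite -e2]; rewrite opprK.
have elat j := vlat _ (Ve j).
have [expand expandN] := dual_basis hest.
have basisN w : (forall j, pairing w (e j) = 0) -> w = 0.
  by move=> h; rewrite (expandN w) big1 // => j _; rewrite h scale0r.
pose r i : R := ratr (q i).
have hvr : v = \sum_j r j *: e j by [].
have estv i : pairing (estar i) v = r i by rewrite hvr coord.
have sumr0 : \sum_j r j = 0.
  move: huv; rewrite hvr pairing_sumr.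
  under eq_bigr do rewrite pairingZr ue mulrN1.
  by rewrite sumrN => /eqP; rewrite oppr_eq0 => /eqP.
have [vP _] := hv.
have vlt := vlat _ hv.
have etaF i : dual P (etaFi i) /\ lattice_pt (etaFi i) /\
    (forall x, Fi i x <-> (P x /\ pairing (etaFi i) x = -1)).
  have [h1 [h2 h3]] := facet_eta (hFi i).1 P0 (heta i).
  by split => //; split => //; apply: hlat.
have Fie i j : j != i -> Fi i (e j).
  move=> hj; have := ((hFi i).2 (e j)).2 (@conv_on_delta _ _ _ e (fun j0 => j0 != i) j hj).
  by case.
have etae i j : j != i -> pairing (etaFi i) (e j) = -1.
  by move=> hj; apply: (heta i); apply: Fie.
pose c i := pairing (etaFi i) (e i) + 1.
have etadec i : etaFi i = u + c i *: estar i.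
  apply/eqP; rewrite -subr_eq0; apply/eqP; apply: basisN => j.
  rewrite !pairingBl pairingDl pairingZl hest ue.
  have [<-|hj] := eqVneq i j; first by rewrite /= mulr1 /c; ring.
  rewrite etae; last by rewrite eq_sym.
  by rewrite /= mulr0 addr0 subrr.
have etax i x : pairing (etaFi i) x = pairing u x + c i * pairing (estar i) x.
  by rewrite {1}etadec pairingDl pairingZl.
have c12 i : c i = 1 \/ c i = 2.
  have [eD [elt echar]] := etaF i.
  have h1 := eD _ (Pe i); have h2 := eD _ (Pne i).
  rewrite pairingNr in h2.
  have cint : c i \is a Num.int.
    by rewrite /c; apply: rpredD; [exact: pairing_int elt (elat i) | exact: rpred1].
  have cn0 : c i != 0.
    apply/eqP => c0.
    have Fii : Fi i (e i) by apply/echar; split => //; rewrite /c in c0; lra.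
    have [w [w0 [wA [w1 ew]]]] := ((hFi i).2 (e i)).1 (conj Fii (Fe i)).
    have := congr1 (pairing (estar i)) ew; rewrite hest eqxx coord // wA ?eqxx //.
    by move/eqP; rewrite oner_eq0.
  apply: int12 => //; last by rewrite /c; lra.
  by rewrite lt_neqAle eq_sym cn0 /c; lra.
have cpos i : 0 < c i by case: (c12 i) => ->; lra.
have Fnn j x : F x -> 0 <= pairing (estar j) x.
  move=> Fx; have [eD _] := etaF j; have [Px ux] := (uchar x).1 Fx.
  have := eD x Px; rewrite etax ux => h.
  have := cpos j; nra.
have sumv : \sum_j - (r j *: e j) = - v by rewrite sumrN hvr.
have F9 i : pairing (etaFi i) v = -1 -> c i = 1.
  move=> hev; case: (c12 i) => // c2; exfalso.
  have [eD [elt echar]] := etaF i.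
  have hne : pairing (etaFi i) (- e i) = -1 by rewrite pairingNr; rewrite /c in c2; lra.
  pose pts (m : option 'I_d) := match m with None => v | Some j => if j == i then - e i else e j end.
  pose al (m : option 'I_d) : R := match m with None => 1 | Some j => if j == i then r i else - r j end.
  have := @nodep _ _ P (Fi i) (etaFi i) _ pts al None (hsimp _ (hFi i).1).
  have -> : al None = 1 by [].
  move=> H; have : (1 : R) = 0; last by move/eqP; rewrite oner_eq0.
  apply: H.
  - by move=> x /echar [].
  - by move=> x /echar [].
  - case=> [j|] /=; last exact: hv.
    by case: eqP => _; [exact: Vne | exact: Ve].
  - case=> [j|] /=; last by apply/echar.
    case: eqP => [_|hj]; first by apply/echar.
    by apply: Fie; apply/eqP.
  - case=> [j|] // _ /=; apply/eqP => h; have := congr1 (pairing u) h; rewrite huv.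
    by case: (j == i); rewrite ?une ?ue => hh; lra.
  - rewrite big_option /= scale1r.
    rewrite (eq_bigr (fun j => - (r j *: e j))) ?sumv ?subrr //.
    by move=> j _; case: eqP => [->|_]; rewrite ?scalerN ?scaleNr.
have rq i : (q i < 0) = (r i < 0) by rewrite /r -(ltr_rat R) rmorph0.
have rq1 i : (q i = -1) <-> (r i = -1).
  split => h; first by rewrite /r h rmorphN1.
  by apply: (@ratr_eq R); rewrite -/(r i) h rmorphN1.
have ev i : pairing (etaFi i) v = c i * r i by rewrite etax huv estv add0r.
have rneg i : r i < 0 -> r i = -1 /\ c i = 1.
  move=> hr; have [eD [elt echar]] := etaF i.
  have hint : c i * r i \is a Num.int by rewrite -ev; exact: pairing_int elt vlt.
  have hge : -1 <= c i * r i by rewrite -ev; exact: eD _ vP.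
  have hlt : c i * r i < 0 by have := cpos i; nra.
  have e1 := intm1 hint hge hlt.
  have c1 := F9 i (etrans (ev i) e1).
  by move: e1; rewrite c1 mul1r.
have rm1 i : r i = -1 -> Fi i v /\ c i = 1.
  move=> hr; have [eD [elt echar]] := etaF i.
  have hge := eD _ vP; rewrite ev hr in hge.
  have c1 : c i = 1 by case: (c12 i) => // c2; rewrite c2 in hge; lra.
  by split=> //; apply/echar; split=> //; rewrite ev hr c1; lra.
have rF i : Fi i v -> r i = -1.
  move=> hv'; have [eD [elt echar]] := etaF i.
  have [_ e1] := (echar v).1 hv'.
  have c1 := F9 i e1.
  by move: e1; rewrite ev c1 mul1r.
have usum y : pairing u y = - \sum_j pairing (estar j) y.
  rewrite {1}(expandN u) pairing_suml.
  by under eq_bigr do rewrite pairingZl ue mulN1r; rewrite sumrN.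
case: hpoly => np [pg hpg].
have estarD i : c i = 1 -> dual P (estar i).
  move=> c1 x Px; have [eD [elt echar]] := etaF i.
  apply: (km_ge hpg _ Px) => z hz.
  have [Pz _] := hz.
  have zl := vlat z hz.
  have uzi : pairing u z \is a Num.int by exact: pairing_int ulat zl.
  have h1 := uD z Pz; have h2 := nuD z Pz; rewrite pairingNl in h2.
  have h2' : pairing u z <= 1 by lra.
  case: (intm101 uzi h1 h2') => [um1|[u0|u1]].
  - have Fz : F z by apply/uchar.
    have := Fnn i z Fz; lra.
  - by have := eD z Pz; rewrite etax u0 c1 add0r mul1r.
  - have Fz : F (- z) by apply: (nuchar z).2; split => //; rewrite pairingNl u1.
    have hs := usum (- z); rewrite pairingNr u1 in hs.
    have : pairing (estar i) (- z) <= \sum_j pairing (estar j) (- z).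
      rewrite (bigD1 i) //= lerDl; apply: sumr_ge0 => j _; exact: Fnn.
    rewrite pairingNr; lra.
have Pg k : P (pg k) by apply/hpg; exact: (@conv_on_delta _ _ _ pg predT k isT).
have rpos i : 0 < r i -> r i = 1.
  move=> hr.
  pose g k := pairing (estar i) (pg k).
  pose h k := 1 - pairing u (pg k).
  have [k0 gk0] : exists k, 0 < g k.
    apply: NNPP => hn.
    have : 0 <= pairing (- estar i) (e i).
      apply: (@conv_on_ge _ _ _ pg predT (- estar i) 0 (e i)) => [k _|]; last exact/hpg.
      rewrite pairingNl oppr_ge0 leNgt; apply/negP => hk; apply: hn; by exists k.
    rewrite pairingNl hest eqxx /=; lra.
  have [ks [gks hmin]] := argmin (Q := fun k => 0 < g k) (fun k => h k / g k) gk0.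
  pose ts := h ks / g ks.
  have h0 k : 0 <= h k.
    have := nuD (pg k) (Pg k); rewrite pairingNl /h; lra.
  have hks : 0 < h ks.
    rewrite lt_neqAle h0 andbT; apply/eqP => h0'.
    have : F (- pg ks).
      apply: (nuchar _).2; split => //; rewrite pairingNl; rewrite /h in h0'; lra.
    move/(Fnn i); rewrite pairingNr -/(g ks); lra.
  have ts0 : 0 < ts by apply: divr_gt0.
  have tsg : ts * g ks = h ks by rewrite /ts divfK // lt0r_neq0.
  pose ys := - u - ts *: estar i.
  have ysx x : pairing ys x = - pairing u x - ts * pairing (estar i) x.
    by rewrite pairingBl pairingNl pairingZl.
  have ysD : dual P ys.
    move=> x Px; apply: (@conv_on_ge _ _ _ pg predT ys (-1) x) => [k _|]; last exact/hpg.
    rewrite ysx -/(g k).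
    have hk := h0 k; rewrite /h in hk.
    case: (leP (g k) 0) => gk; first by nra.
    have := ler_wpM2r (ltW gk) (hmin k gk); rewrite divfK ?lt0r_neq0 // /h -/ts.
    lra.
  pose b j := if j == i then pg ks else - e j.
  have linb : lin_indep b.
    move=> cc hcc.
    have key l : pairing (estar l) (\sum_j cc j *: b j) =
        cc i * pairing (estar l) (pg ks) - \sum_(j | j != i) cc j * (l == j)%:R.
      rewrite pairing_sumr (bigD1 i) //= /b eqxx pairingZr; congr (_ + _).
      rewrite -sumrN; apply: eq_bigr => j /negbTE ->.
      by rewrite pairingZr pairingNr hest mulrN.
    have ci : cc i = 0.
      have := key i; rewrite hcc pairing0r big1 => [|j hj]; last first.
        by rewrite eq_sym (negbTE hj) mulr0.
      rewrite subr0 -/(g ks) => /esym /eqP; rewrite mulf_eq0 (negbTE (lt0r_neq0 gks)) orbF.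
      by move/eqP.
    move=> l; case: (l =P i) => [->|hl] //.
    have := key l; rewrite hcc pairing0r ci mul0r add0r (bigD1 l) /=; last by apply/eqP.
    rewrite eqxx mulr1 big1 ?addr0 => [/esym /eqP|j /andP[_ hj]].
      by rewrite oppr_eq0 => /eqP.
    by rewrite eq_sym (negbTE hj) mulr0.
  have Pb j : P (b j) by rewrite /b; case: eqP => _; [exact: Pg | exact: Pne].
  have ysb j : pairing ys (b j) = -1.
    rewrite /b; case: eqP => [_|hj]; first by rewrite ysx -/(g ks) tsg /h; ring.
    have hij : (i == j) = false by apply/eqP => e'; apply: hj; rewrite e'.
    by rewrite ysx !pairingNr ue hest hij /=; ring.
  have ysV := tight ysD linb Pb ysb.
  have yslat := hlat ys ysV.
  have yei : pairing ys (e i) = 1 - ts by rewrite ysx ue hest eqxx /=; ring.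
  have tsint : ts \is a Num.int.
    have h1 : 1 - ts \is a Num.int by rewrite -yei; exact: pairing_int yslat (elat i).
    have -> : ts = 1 - (1 - ts) by ring.
    by apply: rpredB; [exact: rpred1 | exact: h1].
  have ts2 : ts <= 2 by have := ysD _ (Pe i); rewrite yei; lra.
  have yv : pairing ys v = - (ts * r i) by rewrite ysx huv estv; ring.
  have tr1 : ts * r i = 1.
    apply: int01.
    - by rewrite -[ts * r i]opprK -yv rpredN; exact: pairing_int yslat vlt.
    - exact: mulr_gt0.
    - by have := ysD _ vP; rewrite yv; lra.
  case: (int12 tsint ts0 ts2) => [t1|t2]; first by move: tr1; rewrite t1 mul1r.
  exfalso.
  pose G x := P x /\ pairing ys x = -1.
  have facG : facet P G.
    exists ys, (-1); split.
      by apply/eqP => y0; have := ysb i; rewrite y0 pairing0l; lra.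
    split; first exact: ysD.
    split; first by [].
    exists b; split; first by move=> j; split; [exact: Pb | exact: ysb].
    by move=> cc _ hcc; apply: linb.
  pose pts (m : option 'I_d) := match m with None => v | Some j => if j == i then e i else - e j end.
  pose al (m : option 'I_d) : R := match m with None => 1 | Some j => if j == i then - r i else r j end.
  have := @nodep _ _ P G ys _ pts al None (hsimp _ facG).
  have -> : al None = 1 by [].
  move=> H; have : (1 : R) = 0; last by move/eqP; rewrite oner_eq0.
  apply: H.
  - by move=> x [].
  - by move=> x [].
  - case=> [j|] /=; last exact: hv.
    by case: eqP => _; [exact: Ve | exact: Vne].
  - case=> [j|] /=; last by split => //; rewrite yv tr1.
    case: eqP => [_|hj]; first by split; [exact: Pe | rewrite yei t2; lra].
    split; first exact: Pne.
    by have := ysb j; rewrite /b; case: eqP.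
  - case=> [j|] // _ /=; apply/eqP => hh; have := congr1 (pairing u) hh; rewrite huv.
    by case: (j == i); rewrite ?une ?ue => hh'; lra.
  - rewrite big_option /= scale1r.
    rewrite (eq_bigr (fun j => - (r j *: e j))) ?sumv ?subrr //.
    by move=> j _; case: eqP => [->|_]; rewrite ?scalerN ?scaleNr.
have m1n1 : ((-1 : rat) == 1) = false.
  apply/negP => /eqP hh; have : (-1 : rat) < 1 by lra.
  by rewrite hh ltxx.
have tri i : q i = -1 \/ q i = 0 \/ q i = 1.
  case: (ltgtP (r i) 0) => [hlt|hgt|heq].
  - by left; apply/rq1; exact: (rneg i hlt).1.
  - by right; right; apply: (@ratr_eq R); rewrite rmorph1; exact: rpos.
  - by right; left; apply: (@ratr_eq R); rewrite rmorph0; exact: heq.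
split.
  move=> i; split; [|split].
  - rewrite rq; split => hh; first by apply/rq1; exact: (rneg i hh).1.
    by rewrite ((rq1 i).1 hh); lra.
  - split => [/rq1 hh|hh]; first exact: (rm1 i hh).1.
    by apply/rq1; exact: rF.
  - rewrite rq => hh; have [_ c1] := rneg i hh.
    have ee : estar i = etaFi i - u by rewrite etadec c1 scale1r addrC addKr.
    split => //; split; first exact: estarD.
    by rewrite ee; apply: lattice_sub => //; exact: (etaF i).2.1.
exists [set i | q i == -1], [set i | q i == 1].
have cardS (b : 'I_d -> bool) : \sum_j ((b j)%:R : rat) = (#|[set j | b j]|)%:R.
  rewrite -sum1_card natr_sum [RHS]big_mkcond; apply: eq_bigr => j _.
  by rewrite inE; case: (b j).
split.
  apply/pred0P => x /=; rewrite !inE; apply/negP => /andP[/eqP h1 /eqP h2].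
  by move: m1n1; rewrite -h1 h2 eqxx.
split.
  have hs : \sum_j q j = 0.
    by apply: (@ratr_eq R); rewrite rmorph_sum rmorph0; exact: sumr0.
  have : \sum_j q j = \sum_j (((q j == 1) : bool)%:R - ((q j == -1) : bool)%:R).
    apply: eq_bigr => j _; case: (tri j) => [->|[->|->]].
    - by rewrite m1n1 eqxx.
    - by [].
    - by rewrite eq_sym m1n1 eqxx.
  rewrite sumrB !cardS hs => /eqP; rewrite eq_sym subr_eq0 eqr_nat => /eqP.
  by [].
rewrite hvr [X in _ = X - _]big_mkcond [X in _ = _ - X]big_mkcond -sumrB /=; apply: eq_bigr => j _; rewrite !inE.
rewrite /r; case: (tri j) => [->|[->|->]].
- by rewrite m1n1 eqxx rmorphN1 scaleN1r sub0r.
- have h01 : ((0 : rat) == 1) = false by rewrite eq_sym oner_eq0.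
  have h0m1 : ((0 : rat) == -1) = false by rewrite eq_sym oppr_eq0 oner_eq0.
  by rewrite h01 h0m1 rmorph0 scale0r subrr.
- by rewrite eqxx eq_sym m1n1 rmorph1 scale1r subr0.
Qed.
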